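(* Let $\rho^s$ be a qubit state on $\mathbb{C}^2$ with $l_1$-norm coherence $\mathcal{C}_{l_1}(\rho^s)>\sqrt{1/2}$, and let $A$, $B$ be auxiliary qubits each prepared in $|0\rangle\langle 0|$. Then there exists an incoherent operation $\Lambda$ on $(\mathbb{C}^2)^{\otimes 3}$ such that $\Lambda(\rho^s\otimes|0\rangle\langle 0|^A\otimes|0\rangle\langle 0|^B)$ is a genuinely three-qubit nonlocal state.
   Context: Coherence is with respect to the computational basis; $\mathcal{C}_{l_1}(\rho)=\sum_{i\neq j}|\rho_{ij}|$. An incoherent operation is a completely positive trace-preserving map $\Lambda(\rho)=\sum_j K_j\rho K_j^\dagger$ whose Kraus operators map states diagonal in the computational basis to (unnormalized) diagonal states. For measurements $X,Y,Z$ by three parties with outcomes $x,y,z$, the correlations are Svetlichny local if $P(xyz|XYZ)=\sum_\lambda q_\lambda P_\lambda(xy|XY)P_\lambda(z|Z)+\sum_\mu q_\mu P_\mu(xz|XZ)P_\mu(y|Y)+\sum_\nu q_\nu P_\nu(yz|YZ)P_\nu(x|X)$ with $q_\lambda,q_\mu,q_\nu\geq 0$ summing to $1$. A three-qubit state is genuinely three-qubit nonlocal if for some choice of local measurements its correlations are not Svetlichny local. *)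

(* Defs.v *)
From HB Require Import structures.
From mathcomp Require Import all_boot all_order all_algebra.
From mathcomp Require Import reals.
From mathcomp.real_closed Require Import complex mxtens.
Set Implicit Arguments. Unset Strict Implicit. Unset Printing Implicit Defensive.
Import Order.TTheory GRing.Theory Num.Theory.
Local Open Scope ring_scope.
Local Open Scope complex_scope.

Section Quantum.
Variable R : realType.
Local Notation C := (complex R).

Definition adjmx {m n} (A : 'M[C]_(m, n)) : 'M[C]_(n, m) := (map_mx Num.conj A)^T.

(* positive semidefinite: <v, A v> is a nonnegative real for every vector v
   (in C = R[i], 0 <= z means z is real and nonnegative) *)
Definition psdmx {n} (A : 'M[C]_n) : Prop :=
  forall v : 'cV[C]_n, 0 <= (adjmx v *m A *m v) 0 0.

Definition density {n} (rho : 'M[C]_n) : Prop := psdmx rho /\ \tr rho = 1.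

Definition coh_l1 {n} (rho : 'M[C]_n) : C :=
  \sum_(i < n) \sum_(j < n | i != j) `|rho i j|.

Definition kraus_apply {n} (Ks : seq 'M[C]_n) (rho : 'M[C]_n) : 'M[C]_n :=
  \sum_(K <- Ks) (K *m rho *m adjmx K).

Definition kraus_tp {n} (Ks : seq 'M[C]_n) : Prop :=
  \sum_(K <- Ks) (adjmx K *m K) = 1%:M.

Definition incoherent_op {n} (Ks : seq 'M[C]_n) : Prop :=
  kraus_tp Ks /\
  forall K, K \in Ks -> forall rho : 'M[C]_n, density rho -> is_diag_mx rho ->
    is_diag_mx (K *m rho *m adjmx K).

Definition qubit_povm (m o : nat) (E : 'I_m -> 'I_o -> 'M[C]_2) : Prop :=
  forall s, (forall x, psdmx (E s x)) /\ \sum_(x < o) E s x = 1%:M.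

Notation M3 := ('M[C]_(2 * 2 * 2)).

Definition qcorr (rho : M3) mX mY mZ oX oY oZ
  (E : 'I_mX -> 'I_oX -> 'M[C]_2) (F : 'I_mY -> 'I_oY -> 'M[C]_2)
  (G : 'I_mZ -> 'I_oZ -> 'M[C]_2) X Y Z x y z : C :=
  \tr (rho *m ((E X x *t F Y y) *t G Z z)).

Definition cond_dist2 (mA mB oA oB : nat) (P : 'I_mA -> 'I_mB -> 'I_oA -> 'I_oB -> R) :=
  forall a b, (forall x y, 0 <= P a b x y) /\ \sum_(x < oA) \sum_(y < oB) P a b x y = 1.
Definition cond_dist1 (mA oA : nat) (P : 'I_mA -> 'I_oA -> R) :=
  forall a, (forall x, 0 <= P a x) /\ \sum_(x < oA) P a x = 1.

(* Svetlichny-local correlations (hidden variables ranging over finite sets,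
   which is no loss of generality: the Svetlichny-local set is a polytope) *)
Definition svetlichny_local mX mY mZ oX oY oZ
  (P : 'I_mX -> 'I_mY -> 'I_mZ -> 'I_oX -> 'I_oY -> 'I_oZ -> R) : Prop :=
  exists (nl nm nn : nat) (ql : 'I_nl -> R) (qm : 'I_nm -> R) (qn : 'I_nn -> R)
    (Pl2 : 'I_nl -> 'I_mX -> 'I_mY -> 'I_oX -> 'I_oY -> R) (Pl1 : 'I_nl -> 'I_mZ -> 'I_oZ -> R)
    (Pm2 : 'I_nm -> 'I_mX -> 'I_mZ -> 'I_oX -> 'I_oZ -> R) (Pm1 : 'I_nm -> 'I_mY -> 'I_oY -> R)
    (Pn2 : 'I_nn -> 'I_mY -> 'I_mZ -> 'I_oY -> 'I_oZ -> R) (Pn1 : 'I_nn -> 'I_mX -> 'I_oX -> R),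
    [/\ (forall l, 0 <= ql l), (forall k, 0 <= qm k), (forall k, 0 <= qn k) &
        \sum_l ql l + \sum_k qm k + \sum_k qn k = 1] /\
    [/\ (forall l, cond_dist2 (Pl2 l) /\ cond_dist1 (Pl1 l)),
        (forall k, cond_dist2 (Pm2 k) /\ cond_dist1 (Pm1 k)),
        (forall k, cond_dist2 (Pn2 k) /\ cond_dist1 (Pn1 k)) &
        forall X Y Z x y z,
          P X Y Z x y z =
            \sum_l ql l * Pl2 l X Y x y * Pl1 l Z z
          + \sum_k qm k * Pm2 k X Z x z * Pm1 k Y y
          + \sum_k qn k * Pn2 k Y Z y z * Pn1 k X x].

Definition genuinely_3nonlocal (rho : M3) : Prop :=
  exists (mX mY mZ oX oY oZ : nat)
    (E : 'I_mX -> 'I_oX -> 'M[C]_2) (F : 'I_mY -> 'I_oY -> 'M[C]_2)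
    (G : 'I_mZ -> 'I_oZ -> 'M[C]_2),
    [/\ qubit_povm E, qubit_povm F, qubit_povm G &
      ~ exists P : 'I_mX -> 'I_mY -> 'I_mZ -> 'I_oX -> 'I_oY -> 'I_oZ -> R,
          svetlichny_local P /\
          forall X Y Z x y z, qcorr rho E F G X Y Z x y z = (P X Y Z x y z)%:C].

Definition ket0bra0 : 'M[C]_2 := delta_mx 0 0.

End Quantum.

(* Main.v *)
Require Import Defs.
From HB Require Import structures.
From mathcomp Require Import all_boot all_order all_algebra.
From mathcomp Require Import reals.
From mathcomp.real_closed Require Import complex mxtens.
From mathcomp Require Import fingroup perm ring lra.
Import Order.TTheory GRing.Theory Num.Theory.
Local Open Scope ring_scope.
Local Open Scope complex_scope.
Set Implicit Arguments. Unset Strict Implicit. Unset Printing Implicit Defensive.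

Section S.
Variable R : realType.
Local Notation C := (complex R).

Definition o0 : 'I_2 := ord0.
Definition o1 : 'I_2 := ord_max.

Lemma sum2 (V : zmodType) (F : 'I_2 -> V) : \sum_(i < 2) F i = F o0 + F o1.
Proof. by rewrite big_ord_recl big_ord1; congr (_ + F _); apply: val_inj. Qed.

Lemma sum_tens (V : zmodType) m n (F : 'I_(m * n) -> V) :
  \sum_(k < m * n) F k = \sum_(i < m) \sum_(j < n) F (mxtens_index (i, j)).
Proof.
rewrite (reindex (@mxtens_index m n)) /=; last first.
  by exists (@mxtens_unindex m n) => ? _; [apply: mxtens_indexK | apply: mxtens_unindexK].
by rewrite pair_bigA /=; apply: eq_bigr => -[].
Qed.

Definition idx3 (a b c : 'I_2) : 'I_(2 * 2 * 2) := mxtens_index (mxtens_index (a, b), c).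

Lemma sum8 (V : zmodType) (F : 'I_(2 * 2 * 2) -> V) :
  \sum_k F k = \sum_a \sum_b \sum_c F (idx3 a b c).
Proof. by rewrite sum_tens sum_tens. Qed.

Definition sp : 'S_(2 * 2 * 2) := tperm (idx3 o1 o0 o0) (idx3 o1 o1 o1).
Definition Kp : 'M[C]_(2 * 2 * 2) := perm_mx sp.

Lemma adjK : adjmx Kp = perm_mx sp^-1.
Proof.
rewrite /adjmx /Kp -tr_perm_mx.
apply/matrixP => i j; rewrite !mxE.
exact: conjc_nat.
Qed.

Lemma sigmaE (t : 'M[C]_(2 * 2 * 2)) i j : (Kp *m t *m adjmx Kp) i j = t (sp i) (sp j).
Proof. by rewrite adjK -col_permE /Kp -row_permE !mxE. Qed.

Lemma s000 : sp (idx3 o0 o0 o0) = idx3 o0 o0 o0. Proof. by rewrite tpermD. Qed.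
Lemma s001 : sp (idx3 o0 o0 o1) = idx3 o0 o0 o1. Proof. by rewrite tpermD. Qed.
Lemma s010 : sp (idx3 o0 o1 o0) = idx3 o0 o1 o0. Proof. by rewrite tpermD. Qed.
Lemma s011 : sp (idx3 o0 o1 o1) = idx3 o0 o1 o1. Proof. by rewrite tpermD. Qed.
Lemma s100 : sp (idx3 o1 o0 o0) = idx3 o1 o1 o1. Proof. by rewrite tpermL. Qed.
Lemma s101 : sp (idx3 o1 o0 o1) = idx3 o1 o0 o1. Proof. by rewrite tpermD. Qed.
Lemma s110 : sp (idx3 o1 o1 o0) = idx3 o1 o1 o0. Proof. by rewrite tpermD. Qed.
Lemma s111 : sp (idx3 o1 o1 o1) = idx3 o1 o0 o0. Proof. by rewrite tpermR. Qed.
Definition sE := (s000, s001, s010, s011, s100, s101, s110, s111).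

Lemma tens3E (A B D : 'M[C]_2) a b c a' b' c' :
  ((A *t B) *t D) (idx3 a b c) (idx3 a' b' c') = A a a' * B b b' * D c c'.
Proof. by rewrite /idx3 !tensmxE. Qed.

Lemma k0E : (ket0bra0 R o0 o0 = 1) * (ket0bra0 R o0 o1 = 0) * (ket0bra0 R o1 o0 = 0) * (ket0bra0 R o1 o1 = 0).
Proof. by rewrite !mxE. Qed.

Lemma trM (A B : 'M[C]_(2 * 2 * 2)) : \tr (A *m B) =
  \sum_a \sum_b \sum_c \sum_a' \sum_b' \sum_c'
     A (idx3 a b c) (idx3 a' b' c') * B (idx3 a' b' c') (idx3 a b c).
Proof.
rewrite /mxtrace sum8; apply: eq_bigr => a _; apply: eq_bigr => b _; apply: eq_bigr => c _.
by rewrite mxE sum8.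
Qed.

Definition proj (w wb : C) (x : 'I_2) : 'M[C]_2 :=
  \matrix_(i, j) (if i == j then 1/2 else (-1) ^+ x * (if i == o0 then wb else w) / 2).

Lemma projE w wb x : (proj w wb x o0 o0 = 1/2) * (proj w wb x o1 o1 = 1/2) *
  (proj w wb x o0 o1 = (-1) ^+ x * wb / 2) * (proj w wb x o1 o0 = (-1) ^+ x * w / 2).
Proof. by rewrite !mxE. Qed.


Lemma I2P (i : 'I_2) : i = o0 \/ i = o1.
Proof. by case: i => [[|[|//]]] Hi; [left|right]; apply: val_inj. Qed.

Definition e0 := idx3 o0 o0 o0.
Definition e7 := idx3 o1 o1 o1.

Lemma idx3P (P : 'I_(2 * 2 * 2) -> Prop) : (forall a b c, P (idx3 a b c)) -> forall i, P i.
Proof.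
move=> H i; case: (mxtens_indexP i) => ij c; case: (mxtens_indexP ij) => a b; exact: H.
Qed.

Lemma sigma_deltas (rho : 'M[C]_2) :
  Kp *m ((rho *t ket0bra0 R) *t ket0bra0 R) *m adjmx Kp =
  rho o0 o0 *: delta_mx e0 e0 + rho o0 o1 *: delta_mx e0 e7 +
  rho o1 o0 *: delta_mx e7 e0 + rho o1 o1 *: delta_mx e7 e7.
Proof.
apply/matrixP => i j; rewrite sigmaE.
move: i j; apply: idx3P => a b c; apply: idx3P => a' b' c'.
case: (I2P a) => ->; case: (I2P b) => ->; case: (I2P c) => ->;
case: (I2P a') => ->; case: (I2P b') => ->; case: (I2P c') => ->;
rewrite !sE !tens3E !k0E !mxE /=; ring.
Qed.
End S.

Section S.
Variable R : realType.
Local Notation C := (complex R).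

Lemma tr_delta n (i j : 'I_n) (M : 'M[C]_n) : \tr (delta_mx i j *m M) = M j i.
Proof.
rewrite /mxtrace (bigD1 i) //= big1 ?addr0; last first.
  by move=> k /negbTE nki; rewrite mxE big1 // => l _; rewrite mxE nki /= mul0r.
rewrite mxE (bigD1 j) //= big1 ?addr0; last first.
  by move=> l /negbTE nlj; rewrite mxE nlj andbF mul0r.
by rewrite mxE !eqxx mul1r.
Qed.

Lemma qcorr_val (rho : 'M[C]_2) wX wbX wY wbY wZ wbZ x y z :
  \tr ((Kp R *m ((rho *t ket0bra0 R) *t ket0bra0 R) *m adjmx (Kp R)) *m
        ((proj wX wbX x *t proj wY wbY y) *t proj wZ wbZ z)) =
  (rho o0 o0 + rho o1 o1) / 8 + (-1) ^+ x * (-1) ^+ y * (-1) ^+ z *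
     (rho o0 o1 * (wX * wY * wZ) + rho o1 o0 * (wbX * wbY * wbZ)) / 8.
Proof.
rewrite sigma_deltas !mulmxDl !mxtraceD -!scalemxAl !mxtraceZ !tr_delta /e0 /e7.
rewrite !tens3E !projE.
field; by rewrite ?pnatr_eq0.
Qed.
End S.

Definition sgn3 (V : pzRingType) (X Y Z : 'I_2) : V := if (X + Y + Z < 2)%N then 1 else -1.

Definition Sv (V : pzRingType) (P : 'I_2 -> 'I_2 -> 'I_2 -> 'I_2 -> 'I_2 -> 'I_2 -> V) : V :=
  \sum_(X < 2) \sum_(Y < 2) \sum_(Z < 2) sgn3 V X Y Z * \sum_(x < 2) \sum_(y < 2) \sum_(z < 2) (-1) ^+ (x + y + z) * P X Y Z x y z.

Section S.
Variable R : realType.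

Lemma Sv_ext (V : pzRingType) (f g : 'I_2 -> 'I_2 -> 'I_2 -> 'I_2 -> 'I_2 -> 'I_2 -> V) :
  (forall X Y Z x y z, f X Y Z x y z = g X Y Z x y z) -> Sv f = Sv g.
Proof.
move=> H; rewrite /Sv; apply: eq_bigr => X _; apply: eq_bigr => Y _; apply: eq_bigr => Z _.
congr (_ * _); apply: eq_bigr => x _; apply: eq_bigr => y _; apply: eq_bigr => z _.
by rewrite H.
Qed.

Lemma Sv_add (V : comPzRingType) (f g : 'I_2 -> 'I_2 -> 'I_2 -> 'I_2 -> 'I_2 -> 'I_2 -> V) :
  Sv (fun X Y Z x y z => f X Y Z x y z + g X Y Z x y z) = Sv f + Sv g.
Proof. rewrite /Sv !sum2; ring. Qed.

Lemma Sv0 (V : comPzRingType) : Sv (fun _ _ _ _ _ _ => 0 : V) = 0.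
Proof. rewrite /Sv !sum2; ring. Qed.

Lemma Sv_scale (V : comPzRingType) c (f : 'I_2 -> 'I_2 -> 'I_2 -> 'I_2 -> 'I_2 -> 'I_2 -> V) :
  Sv (fun X Y Z x y z => c * f X Y Z x y z) = c * Sv f.
Proof. rewrite /Sv !sum2; ring. Qed.

Lemma Sv_sum (V : comPzRingType) n (F : 'I_n -> 'I_2 -> 'I_2 -> 'I_2 -> 'I_2 -> 'I_2 -> 'I_2 -> V) :
  Sv (fun X Y Z x y z => \sum_(l < n) F l X Y Z x y z) = \sum_(l < n) Sv (F l).
Proof.
elim: n F => [|n IH] F.
  rewrite big_ord0 -[RHS](Sv0 V); apply: Sv_ext => X Y Z x y z; by rewrite big_ord0.
rewrite big_ord_recr /= -IH -Sv_add; apply: Sv_ext => X Y Z x y z; by rewrite big_ord_recr.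
Qed.

Lemma core_bound (e00 e01 e10 e11 f0 f1 : R) :
  -1 <= e00 <= 1 -> -1 <= e01 <= 1 -> -1 <= e10 <= 1 -> -1 <= e11 <= 1 ->
  -1 <= f0 <= 1 -> -1 <= f1 <= 1 ->
  f0 * (e00 + e01 + e10 - e11) + f1 * (e00 - e01 - e10 - e11) <= 4.
Proof.
move=> /andP[? ?] /andP[? ?] /andP[? ?] /andP[? ?] /andP[? ?] /andP[? ?].
have [hA|hA] := lerP 0 (e00 + e01 + e10 - e11);
have [hB|hB] := lerP 0 (e00 - e01 - e10 - e11); nra.
Qed.

Lemma dist2_bound (P : 'I_2 -> 'I_2 -> 'I_2 -> 'I_2 -> R) a b : cond_dist2 P ->
  -1 <= P a b o0 o0 - P a b o0 o1 - P a b o1 o0 + P a b o1 o1 <= 1.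
Proof.
move=> /(_ a b) [H0 H1]; move: H1; rewrite !sum2 => H1.
have := H0 o0 o0; have := H0 o0 o1; have := H0 o1 o0; have := H0 o1 o1.
move=> *; apply/andP; split; lra.
Qed.

Lemma dist1_bound (P : 'I_2 -> 'I_2 -> R) a : cond_dist1 P ->
  -1 <= P a o0 - P a o1 <= 1.
Proof.
move=> /(_ a) [H0 H1]; move: H1; rewrite !sum2 => H1.
have := H0 o0; have := H0 o1.
move=> *; apply/andP; split; lra.
Qed.

Lemma SvE (V : comPzRingType) (P : 'I_2 -> 'I_2 -> 'I_2 -> 'I_2 -> 'I_2 -> 'I_2 -> V) :
  Sv P = \sum_(X < 2) \sum_(Y < 2) \sum_(Z < 2) sgn3 V X Y Z * \sum_(x < 2) \sum_(y < 2) \sum_(z < 2) (-1) ^+ (x + y + z) * P X Y Z x y z.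
Proof. by []. Qed.

Lemma bound_l (P2 : 'I_2 -> 'I_2 -> 'I_2 -> 'I_2 -> R) (P1 : 'I_2 -> 'I_2 -> R) :
  cond_dist2 P2 -> cond_dist1 P1 ->
  Sv (fun X Y Z x y z => P2 X Y x y * P1 Z z) <= 4.
Proof.
move=> H2 H1.
have := core_bound (dist2_bound o0 o0 H2) (dist2_bound o0 o1 H2) (dist2_bound o1 o0 H2)
  (dist2_bound o1 o1 H2) (dist1_bound o0 H1) (dist1_bound o1 H1).
rewrite /Sv !sum2 /sgn3 /= !expr0 !expr1 !expr2.
move=> H; apply: le_trans H; rewrite le_eqVlt; apply/orP; left; apply/eqP; ring.
Qed.

Lemma bound_m (P2 : 'I_2 -> 'I_2 -> 'I_2 -> 'I_2 -> R) (P1 : 'I_2 -> 'I_2 -> R) :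
  cond_dist2 P2 -> cond_dist1 P1 ->
  Sv (fun X Y Z x y z => P2 X Z x z * P1 Y y) <= 4.
Proof.
move=> H2 H1.
have := core_bound (dist2_bound o0 o0 H2) (dist2_bound o0 o1 H2) (dist2_bound o1 o0 H2)
  (dist2_bound o1 o1 H2) (dist1_bound o0 H1) (dist1_bound o1 H1).
rewrite /Sv !sum2 /sgn3 /= !expr0 !expr1 !expr2.
move=> H; apply: le_trans H; rewrite le_eqVlt; apply/orP; left; apply/eqP; ring.
Qed.

Lemma bound_n (P2 : 'I_2 -> 'I_2 -> 'I_2 -> 'I_2 -> R) (P1 : 'I_2 -> 'I_2 -> R) :
  cond_dist2 P2 -> cond_dist1 P1 ->
  Sv (fun X Y Z x y z => P2 Y Z y z * P1 X x) <= 4.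
Proof.
move=> H2 H1.
have := core_bound (dist2_bound o0 o0 H2) (dist2_bound o0 o1 H2) (dist2_bound o1 o0 H2)
  (dist2_bound o1 o1 H2) (dist1_bound o0 H1) (dist1_bound o1 H1).
rewrite /Sv !sum2 /sgn3 /= !expr0 !expr1 !expr2.
move=> H; apply: le_trans H; rewrite le_eqVlt; apply/orP; left; apply/eqP; ring.
Qed.

Lemma local_bound (P : 'I_2 -> 'I_2 -> 'I_2 -> 'I_2 -> 'I_2 -> 'I_2 -> R) :
  svetlichny_local P -> Sv P <= 4.
Proof.
case=> nl [nm [nn [ql [qm [qn [Pl2 [Pl1 [Pm2 [Pm1 [Pn2 [Pn1 [[hql hqm hqn hsum] [hl hm hn hP]]]]]]]]]]]]].
have -> : Sv P =
  \sum_l ql l * Sv (fun X Y Z x y z => Pl2 l X Y x y * Pl1 l Z z) +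
  \sum_k qm k * Sv (fun X Y Z x y z => Pm2 k X Z x z * Pm1 k Y y) +
  \sum_k qn k * Sv (fun X Y Z x y z => Pn2 k Y Z y z * Pn1 k X x).
  rewrite (@Sv_ext _ P (fun X Y Z x y z =>
     \sum_l ql l * Pl2 l X Y x y * Pl1 l Z z
          + \sum_k qm k * Pm2 k X Z x z * Pm1 k Y y
          + \sum_k qn k * Pn2 k Y Z y z * Pn1 k X x)) //.
  rewrite !Sv_add !Sv_sum.
  congr (_ + _ + _); apply: eq_bigr => l _; rewrite -Sv_scale; apply: Sv_ext => *; by rewrite mulrA.
apply: (@le_trans _ _ (\sum_l ql l * 4 + \sum_k qm k * 4 + \sum_k qn k * 4)).
  apply: lerD; first apply: lerD.
  - by apply: ler_sum => l _; apply: ler_wpM2l => //; case: (hl l) => ? ?; exact: bound_l.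
  - by apply: ler_sum => l _; apply: ler_wpM2l => //; case: (hm l) => ? ?; exact: bound_m.
  - by apply: ler_sum => l _; apply: ler_wpM2l => //; case: (hn l) => ? ?; exact: bound_n.
by rewrite -!mulr_suml -!mulrDl hsum mul1r.
Qed.

End S.

Section S.
Variable R : realType.
Local Notation C := (complex R).

Lemma quadE (A : 'M[C]_2) (v : 'cV[C]_2) : (adjmx v *m A *m v) 0 0 =
  Num.conj (v o0 0) * A o0 o0 * v o0 0 + Num.conj (v o0 0) * A o0 o1 * v o1 0 +
  Num.conj (v o1 0) * A o1 o0 * v o0 0 + Num.conj (v o1 0) * A o1 o1 * v o1 0.
Proof. rewrite !mxE !sum2 !mxE !sum2 !mxE; ring. Qed.

Lemma inv2C : (2 : C)^-1 = (2^-1 : R) +i* 0.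
Proof. by rewrite complexr0 fmorphV rmorph_nat. Qed.

Lemma psd_proj (wr wi : R) x : wr ^+ 2 + wi ^+ 2 <= 1 ->
  psdmx (proj (wr +i* wi) (wr -i* wi) x).
Proof.
move=> hw v; rewrite quadE !projE.
rewrite !mul1r inv2C.
case: (v o0 0) => p q; case: (v o1 0) => r s.
have h1 : 0 <= (1 - wr ^+ 2 - wi ^+ 2) * (r ^+ 2 + s ^+ 2).
  by apply: mulr_ge0; [lra | apply: addr_ge0; apply: sqr_ge0].
case: (I2P x) => -> /=; rewrite ?expr0 ?expr1 ?mulN1r ?mul1r;
rewrite -![Num.conj (_ +i* _)]/(_ +i* _); simpc; apply/andP; split;
  try (apply/eqP; ring).
- have h2 : 0 <= (p + (wr * r + wi * s)) ^+ 2 + (q + (wr * s - wi * r)) ^+ 2.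
    by apply: addr_ge0; apply: sqr_ge0.
  nra.
- have h2 : 0 <= (p - (wr * r + wi * s)) ^+ 2 + (q - (wr * s - wi * r)) ^+ 2.
    by apply: addr_ge0; apply: sqr_ge0.
  nra.
Qed.

Lemma proj_sum (w wb : C) : \sum_(x < 2) proj w wb x = 1%:M.
Proof.
apply/matrixP => i j; rewrite summxE sum2 !mxE.
case: (I2P i) => ->; case: (I2P j) => -> /=; rewrite ?expr0 ?expr1 ?mulr1n ?mulr0n.
- by rewrite -splitr.
- by rewrite !mul1r mulN1r mulNr addrN.
- by rewrite !mul1r mulN1r mulNr addrN.
- by rewrite -splitr.
Qed.

Definition vec2 (v0 v1 : C) : 'cV[C]_2 := \col_i (if i == o0 then v0 else v1).

Lemma herm (rho : 'M[C]_2) : psdmx rho -> rho o1 o0 = Num.conj (rho o0 o1).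
Proof.
move=> H.
have H1 := H (vec2 (1 +i* 0) (0 +i* 0)); have H2 := H (vec2 (0 +i* 0) (1 +i* 0)).
have H3 := H (vec2 (1 +i* 0) (1 +i* 0)); have H4 := H (vec2 (1 +i* 0) (0 +i* 1)).
move: H1 H2 H3 H4; rewrite !quadE !mxE /=.
move: (rho o0 o0) (rho o0 o1) (rho o1 o0) (rho o1 o1) => [a b] [c d] [e f] [g h].
rewrite -![Num.conj (_ +i* _)]/(_ +i* _); simpc.
move=> /andP[/eqP h1 _] /andP[/eqP h2 _] /andP[/eqP h3 _] /andP[/eqP h4 _].
by congr (_ +i* _); lra.
Qed.

Lemma tr2 (rho : 'M[C]_2) : \tr rho = rho o0 o0 + rho o1 o1.
Proof. by rewrite /mxtrace sum2. Qed.

Lemma coh2 (rho : 'M[C]_2) : coh_l1 rho = `|rho o0 o1| + `|rho o1 o0|.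
Proof. by rewrite /coh_l1 sum2 big_mkcond sum2 /= big_mkcond sum2 /= ?add0r ?addr0. Qed.
End S.

Section S.
Variable R : realType.
Local Notation C := (complex R).

Lemma kraus1 (t : 'M[C]_(2 * 2 * 2)) : kraus_apply [:: Kp R] t = Kp R *m t *m adjmx (Kp R).
Proof. by rewrite /kraus_apply big_cons big_nil addr0. Qed.

Lemma incoh : incoherent_op [:: Kp R].
Proof.
split.
  by rewrite /kraus_tp big_cons big_nil addr0 adjK /Kp -perm_mxM mulVg perm_mx1.
move=> K; rewrite inE => /eqP -> rho _ /is_diag_mxP Hd; apply/is_diag_mxP => i j nij.
rewrite sigmaE Hd //.
have : sp i != sp j by rewrite (inj_eq perm_inj); apply: contra nij => /eqP ->.
by apply: contra => /eqP h; apply/eqP; apply: val_inj.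
Qed.

Lemma Sv_morph (P : 'I_2 -> 'I_2 -> 'I_2 -> 'I_2 -> 'I_2 -> 'I_2 -> R) :
  (Sv P)%:C = Sv (fun X Y Z x y z => (P X Y Z x y z)%:C).
Proof.
rewrite /Sv rmorph_sum; apply: eq_bigr => X _; rewrite rmorph_sum; apply: eq_bigr => Y _.
rewrite rmorph_sum; apply: eq_bigr => Z _; rewrite rmorphM; congr (_ * _).
  by rewrite /sgn3; case: ifP => _; rewrite ?rmorphN rmorph1.
rewrite rmorph_sum; apply: eq_bigr => x _; rewrite rmorph_sum; apply: eq_bigr => y _.
rewrite rmorph_sum; apply: eq_bigr => z _; by rewrite rmorphM rmorphXn rmorphN rmorph1.
Qed.

Definition T3 (f g h : 'I_2 -> C) :=
  f o0 * g o0 * h o0 + f o0 * g o0 * h o1 + f o0 * g o1 * h o0 - f o0 * g o1 * h o1 +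
  f o1 * g o0 * h o0 - f o1 * g o0 * h o1 - f o1 * g o1 * h o0 - f o1 * g o1 * h o1.

Lemma Sv_q (d a b : C) (wX wY wZ wbX wbY wbZ : 'I_2 -> C) :
  Sv (fun X Y Z x y z => d / 8 + (-1) ^+ x * (-1) ^+ y * (-1) ^+ z *
     (a * (wX X * wY Y * wZ Z) + b * (wbX X * wbY Y * wbZ Z)) / 8) =
  a * T3 wX wY wZ + b * T3 wbX wbY wbZ.
Proof.
rewrite /Sv /T3 !sum2 /sgn3 /= ?expr0 ?expr1.
field; by rewrite ?pnatr_eq0.
Qed.
End S.

Lemma aux (R : realType) (t s n : R) : 0 <= t -> 0 <= s -> t^+2 = n -> s^+2 = 2^-1 -> s < t + t -> 1/8 < n.
Proof.
move=> t0 s0 t2 s2 hc.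
have h8 : (2^-1 : R) = 4 * (1 / 8) by field.
rewrite h8 in s2.
have p1 : 0 < t + t - s by lra.
have p2 : 0 < t + t + s by lra.
have := mulr_gt0 p1 p2. rewrite -t2. nra.
Qed.

Unset Implicit Arguments.
Theorem theorem5 (R : realType) (rho : 'M[complex R]_2) :
  density rho ->
  ((Num.sqrt (1 / 2 : R))%:C < coh_l1 rho)%R ->
  exists Ks : seq 'M[complex R]_(2 * 2 * 2),
    incoherent_op Ks /\
    genuinely_3nonlocal (kraus_apply Ks ((rho *t ket0bra0 R) *t ket0bra0 R)).
Proof.
move=> [Hpsd Htr] Hcoh.
have Hh := herm Hpsd.
move: Hcoh; rewrite coh2 Hh.
case Ea : (rho o0 o1) Hh => [ar ai] Hh.
rewrite -[Num.conj (_ +i* _)]/(_ +i* _).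
simpc => /= hc.
pose n := ar ^+ 2 + ai ^+ 2.
have hn : 1 / 8 < n.
  have {}hc : Num.sqrt (2^-1 : R) < Num.sqrt (ar ^+ 2 + ai ^+ 2) + Num.sqrt (ar ^+ 2 + (- ai) ^+ 2) := hc.
  rewrite sqrrN -/n in hc.
  have t0 : 0 <= Num.sqrt n by apply: sqrtr_ge0.
  have t2 : Num.sqrt n ^+ 2 = n by rewrite sqr_sqrtr // /n addr_ge0 // sqr_ge0.
  have s0 : 0 <= Num.sqrt (2^-1 : R) by apply: sqrtr_ge0.
  have s2 : Num.sqrt (2^-1 : R) ^+ 2 = 2^-1 by rewrite sqr_sqrtr // invr_ge0 ler0n.
  exact: (aux t0 s0 t2 s2 hc).
have n0 : 0 < 1 + 8 * n by lra.
pose c := 4 / (1 + 8 * n).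
have hc4 : c * (1 + 8 * n) = 4 by rewrite /c mulrAC -mulrA divff ?mulr1 // gt_eqF.
have c0 : 0 < c by rewrite /c divr_gt0.
pose ur := c * (ar - ai). pose ui := - (c * (ar + ai)).
have hu : ur ^+ 2 + ui ^+ 2 <= 1.
  have -> : ur ^+ 2 + ui ^+ 2 = 2 * c ^+ 2 * n by rewrite /ur /ui /n; ring.
  have e1 : c ^+ 2 * (1 + 8 * n) ^+ 2 = 16 by rewrite -exprMn hc4; ring.
  have e2 : 0 <= c ^+ 2 * (1 - 8 * n) ^+ 2 by apply: mulr_ge0; apply: sqr_ge0.
  nra.
pose wr := fun s : 'I_2 => if s == o0 then ur else - ui.
pose wi := fun s : 'I_2 => if s == o0 then ui else ur.
pose vr := fun s : 'I_2 => if s == o0 then 1 else 0 : R.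
pose vi := fun s : 'I_2 => if s == o0 then 0 else 1 : R.
pose E := fun s x => proj (wr s +i* wi s) (wr s -i* wi s) x.
pose F := fun s x => proj (vr s +i* vi s) (vr s -i* vi s) x.
exists [:: Kp R]; split; first exact: incoh.
rewrite kraus1.
exists 2%N, 2%N, 2%N, 2%N, 2%N, 2%N, E, F, F; split.
- move=> s; split; last exact: proj_sum.
  move=> x; apply: psd_proj; rewrite /wr /wi; case: (I2P s) => -> //=.
  by rewrite sqrrN addrC.
- move=> s; split; last exact: proj_sum.
  by move=> x; apply: psd_proj; rewrite /vr /vi; case: (I2P s) => -> /=; rewrite ?expr0n /=; lra.
- move=> s; split; last exact: proj_sum.
  by move=> x; apply: psd_proj; rewrite /vr /vi; case: (I2P s) => -> /=; rewrite ?expr0n /=; lra.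
case=> P [Hloc HP].
have hb := local_bound Hloc.
have hq := Sv_q (rho o0 o0 + rho o1 o1) (rho o0 o1) (rho o1 o0)
  (fun s => wr s +i* wi s) (fun s => vr s +i* vi s) (fun s => vr s +i* vi s)
  (fun s => wr s -i* wi s) (fun s => vr s -i* vi s) (fun s => vr s -i* vi s).
have hv : (Sv P)%:C = rho o0 o1 * T3 (fun s => wr s +i* wi s) (fun s => vr s +i* vi s) (fun s => vr s +i* vi s)
   + rho o1 o0 * T3 (fun s => wr s -i* wi s) (fun s => vr s -i* vi s) (fun s => vr s -i* vi s).
  rewrite -hq Sv_morph; apply: Sv_ext => X Y Z x y z.
  by rewrite -HP /qcorr /E /F qcorr_val.
move: hv; rewrite Ea Hh /T3 /wr /wi /vr /vi /=.
rewrite -[Num.conj (_ +i* _)]/(_ +i* _).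
rewrite -[(Sv P)%:C]/(Sv P +i* 0).
simpc => -[hre _].
have hS : Sv P = 16 * c * n by rewrite hre /ur /ui /n; ring.
rewrite hS in hb.
have : 16 * n <= 1 + 8 * n by rewrite -(ler_pM2l c0) hc4; lra.
lra.
Qed.
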